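(* Let $\alpha>0$ be a constant and let $n$ be an integer with \[ 3 \le n < 10+4\alpha . \] Then the solution curve of the generalized Gelfand problem \[ u''+\frac{n-1}{r}u'+\lambda r^{\alpha}e^{u}=0 \quad (0<r<1), \qquad u'(0)=0,\quad u(1)=0, \] makes infinitely many turns. That is, with $w$ and $\lambda(t)$ as in the context, $\lambda'(t)$ changes sign infinitely many times on $(0,\infty)$.
   Context: Here $\lambda>0$ is a parameter. Let $w(t)$ be the solution of the initial value problem \[ w''+\frac{n-1}{t}w'+t^{\alpha}e^{w}=0, \qquad w(0)=0,\quad w'(0)=0 \qquad (t>0). \] This solution is negative and decreasing and is defined for all $t>0$. For each $t>0$, the function $u(r)=w(tr)-w(t)$ solves the boundary value problem with $\lambda=\lambda(t):=t^{\alpha+2}e^{w(t)}$, and all solutions arise in this way. The solution curve is the parametrized curve \[ t\mapsto(\lambda,u(0))=\bigl(t^{\alpha+2}e^{w(t)},\,-w(t)\bigr), \qquad t\in(0,\infty). \] A turn of the curve is a change of sign of $\lambda'(t)$. *)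

(* Defs.v *)
From Stdlib Require Import Reals Lra.
From Coquelicot Require Import Coquelicot.
Open Scope R_scope.

Definition gelfand_ivp_solution (n : nat) (alpha : R) (w : R -> R) : Prop :=
  w 0 = 0 /\
  filterlim (fun h => (w h - w 0) / h) (at_right 0) (locally 0) /\
  (forall t, 0 < t -> ex_derive w t /\ ex_derive (Derive w) t /\
     Derive (Derive w) t + (INR n - 1) / t * Derive w t
       + Rpower t alpha * exp (w t) = 0).

Definition lambda_of (alpha : R) (w : R -> R) (t : R) : R :=
  Rpower t (alpha + 2) * exp (w t).

Definition infinitely_many_sign_changes (f : R -> R) : Prop :=
  forall N : nat, exists ts : nat -> R,
    (forall i, (i <= N)%nat -> 0 < ts i) /\
    (forall i, (i < N)%nat -> ts i < ts (S i) /\ f (ts i) * f (ts (S i)) < 0).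

(* Main.v *)
Require Import Defs.
From Stdlib Require Import Reals Lra Lia Classical.
From Coquelicot Require Import Coquelicot.
Open Scope R_scope.

Lemma is_derive_cont (f : R -> R) x l : is_derive f x l -> continuity_pt f x.
Proof.
  intro H. apply derivable_continuous_pt.
  exists l. apply is_derive_Reals. exact H.
Qed.

Lemma mono (f df : R -> R) (A : R) :
  (forall s, A <= s -> is_derive f s (df s)) ->
  (forall s, A <= s -> 0 <= df s) ->
  forall u v, A <= u -> u <= v -> f u <= f v.
Proof.
  intros Hd Hp u v Hu Huv.
  destruct (Req_dec u v) as [->|Hne]; [lra|].
  destruct (MVT_gen f u v df) as [c [Hc Heq]].
  - intros y Hy. apply Hd. rewrite Rmin_left in Hy by lra. lra.
  - intros y Hy. apply is_derive_cont with (df y). apply Hd.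
    rewrite Rmin_left in Hy by lra. lra.
  - rewrite Rmin_left in Hc by lra. rewrite Rmax_right in Hc by lra.
    assert (0 <= df c) by (apply Hp; lra).
    assert (0 <= df c * (v - u)) by (apply Rmult_le_pos; lra). lra.
Qed.

Lemma deriv_zero_max (f : R -> R) a b c l :
  is_derive f c l -> a < c -> c < b -> (forall x, a < x -> x < b -> f x <= f c) -> l = 0.
Proof.
  intros H H1 H2 H3.
  pose proof (proj1 (is_derive_Reals f c l) H) as H'.
  pose (pr := exist (fun l0 => derivable_pt_abs f c l0) l H' : derivable_pt f c).
  pose proof (deriv_maximum f a b c pr H1 H2 H3) as E. exact E.
Qed.

Lemma deriv_zero_min (f : R -> R) a b c l :
  is_derive f c l -> a < c -> c < b -> (forall x, a < x -> x < b -> f c <= f x) -> l = 0.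
Proof.
  intros H H1 H2 H3.
  pose proof (proj1 (is_derive_Reals f c l) H) as H'.
  pose (pr := exist (fun l0 => derivable_pt_abs f c l0) l H' : derivable_pt f c).
  pose proof (deriv_minimum f a b c pr H1 H2 H3) as E. exact E.
Qed.

Lemma exp_le x y : x <= y -> exp x <= exp y.
Proof. intros [H|H]; [left; apply exp_increasing; exact H| subst; lra]. Qed.

Lemma exp_gt1 x : 0 < x -> 1 < exp x.
Proof. intro H. rewrite <- exp_0. apply exp_increasing. exact H. Qed.
Lemma exp_lt1 x : x < 0 -> exp x < 1.
Proof. intro H. rewrite <- exp_0. apply exp_increasing. exact H. Qed.

Section Osc.
Variables (a k : R) (x x1 : R -> R).
Hypothesis Ha : 0 < a.
Hypothesis Hk : 0 < k.
Hypothesis Hak : a * a < 4 * k.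
Hypothesis Hx : forall s, is_derive x s (x1 s).
Hypothesis Hx1 : forall s, is_derive x1 s (- a * x1 s - k * (exp (x s) - 1)).

Lemma Dx s : Derive (fun y => x y) s = x1 s.
Proof. apply is_derive_unique. apply Hx. Qed.
Lemma Dx1 s : Derive (fun y => x1 y) s = - a * x1 s - k * (exp (x s) - 1).
Proof. apply is_derive_unique. apply Hx1. Qed.
Lemma exx s : ex_derive (fun y => x y) s.
Proof. eexists. apply Hx. Qed.
Lemma exx1 s : ex_derive (fun y => x1 y) s.
Proof. eexists. apply Hx1. Qed.

Lemma riccati S1 K : a * a / 4 < K ->
  (forall s, S1 <= s -> x s <> 0 /\ K <= k * (exp (x s) - 1) / x s) -> False.
Proof.
  intros HK H.
  set (m := Rmin 1 (K - a * a / 4)).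
  assert (Hm : 0 < m) by (unfold m; apply Rmin_pos; lra).
  assert (Hm1 : m <= 1) by apply Rmin_l.
  assert (Hm2 : m <= K - a * a / 4) by apply Rmin_r.
  set (h := fun s => atan (- x1 s / x s - a / 2) - m * s).
  set (dh := fun s => ((x1 s / x s) ^ 2 + a * (x1 s / x s) + k * (exp (x s) - 1) / x s)
                        / (1 + (- x1 s / x s - a / 2) ^ 2) - m).
  assert (Hd : forall s, S1 <= s -> is_derive h s (dh s)).
  { intros s Hs. destruct (H s Hs) as [Hn _]. unfold h, dh.
    auto_derive.
    - repeat split; auto using exx, exx1.
    - rewrite Dx, Dx1. field. split; auto.
      pose proof (Rsqr_pos_lt _ Hn) as Q. unfold Rsqr in Q. apply Rgt_not_eq. apply Rplus_lt_le_0_compat; [nra | apply pow2_ge_0]. }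
  assert (Hp : forall s, S1 <= s -> 0 <= dh s).
  { intros s Hs. destruct (H s Hs) as [Hn HK2]. unfold dh.
    set (u := - x1 s / x s - a / 2).
    assert (E : (x1 s / x s) ^ 2 + a * (x1 s / x s) = u ^ 2 - a * a / 4) by (unfold u; field; auto).
    rewrite E.
    assert (Hu : 0 < 1 + u ^ 2) by nra.
    cut (m <= (u ^ 2 - a * a / 4 + k * (exp (x s) - 1) / x s) / (1 + u ^ 2)); [lra|].
    apply Rmult_le_reg_r with (1 + u ^ 2); [lra|].
    unfold Rdiv. rewrite Rmult_assoc, Rinv_l by lra. nra. }
  pose proof (mono h dh S1 Hd Hp S1 (S1 + PI / m)) as M.
  assert (0 < PI / m) by (apply Rdiv_lt_0_compat; [apply PI_RGT_0|lra]).
  specialize (M (Rle_refl _) ltac:(lra)).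
  unfold h in M.
  pose proof (atan_bound (- x1 S1 / x S1 - a / 2)).
  pose proof (atan_bound (- x1 (S1 + PI / m) / x (S1 + PI / m) - a / 2)).
  assert (m * (S1 + PI / m) = m * S1 + PI) by (field; lra).
  lra.
Qed.

Lemma energy_zero s1 : x s1 = 0 -> x1 s1 = 0 -> forall s, s <= s1 -> x s = 0.
Proof.
  intros H0 H1 s Hs.
  set (F := fun s => (x1 s ^ 2 / 2 + k * (exp (x s) - 1 - x s)) * exp (2 * a * s)).
  set (dF := fun s => 2 * a * k * (exp (x s) - 1 - x s) * exp (2 * a * s)).
  assert (Hd : forall y, s <= y -> is_derive F y (dF y)).
  { intros y _. unfold F, dF. auto_derive.
    - repeat split; auto using exx, exx1.
    - rewrite Dx, Dx1. field. }
  assert (Hp : forall y, s <= y -> 0 <= dF y).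
  { intros y _. unfold dF. pose proof (exp_ineq1_le (x y)). pose proof (exp_pos (2 * a * y)).
    apply Rmult_le_pos; [|lra]. apply Rmult_le_pos; [|lra]. nra. }
  pose proof (mono F dF s Hd Hp s s1 (Rle_refl _) Hs) as M.
  assert (F0 : F s1 = 0) by (unfold F; rewrite H0, H1, exp_0; field).
  rewrite F0 in M. unfold F in M.
  pose proof (exp_pos (2 * a * s)).
  assert (x1 s ^ 2 / 2 + k * (exp (x s) - 1 - x s) <= 0).
  { destruct (Rle_or_lt (x1 s ^ 2 / 2 + k * (exp (x s) - 1 - x s)) 0); auto. nra. }
  destruct (Req_dec (x s) 0) as [E|E]; auto.
  pose proof (exp_ineq1 _ E). pose proof (pow2_ge_0 (x1 s)). nra.
Qed.

Hypothesis HE : forall s, x s = 0 -> x1 s = 0 -> False.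

Lemma case1 S : ~ (forall s, S < s -> 0 <= x1 s).
Proof.
  intro H1.
  assert (Xm : forall u v, S < u -> u <= v -> x u <= x v).
  { intros u v Hu Huv. apply (mono x x1 u); [intros; apply Hx | intros; apply H1; lra | lra | exact Huv]. }
  assert (Ha1 : forall s, S < s -> x s <= 0).
  { intros s0 Hs0. destruct (Rle_or_lt (x s0) 0) as [|Hpos]; auto. exfalso.
    set (m := k * (exp (x s0) - 1)).
    assert (Hm : 0 < m) by (unfold m; pose proof (exp_gt1 _ Hpos); nra).
    set (v := s0 + x1 s0 / m + 1).
    assert (0 <= x1 s0 / m) by (apply Rdiv_le_0_compat; [apply H1; lra|lra]).
    pose proof (mono (fun s => - (x1 s + m * s)) (fun s => a * x1 s + k * (exp (x s) - 1) - m) s0) as M.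
    assert (v1 : - (x1 v + m * v) >= - (x1 s0 + m * s0)).
    { apply Rle_ge. apply M; [| | lra | unfold v; lra].
      - intros y _. auto_derive. + apply exx1. + rewrite Dx1. ring.
      - intros y Hy. pose proof (H1 y ltac:(lra)) as Q1. pose proof (Xm s0 y ltac:(lra) Hy) as Q2.
        pose proof (exp_le _ _ Q2). unfold m. nra. }
    assert (m * v = m * s0 + x1 s0 + m) by (unfold v; field; lra).
    pose proof (H1 v ltac:(unfold v; lra)). lra. }
  assert (Hb : forall s, S < s -> x s < 0).
  { intros s1 Hs1. destruct (Ha1 s1 Hs1) as [|E]; auto. exfalso. apply (HE s1); auto.
    apply (deriv_zero_max x S (s1 + 1) s1); auto; try lra.
    intros y Hy _. rewrite E. apply Ha1. exact Hy. }
  set (th := ln ((a * a / (4 * k) + 1) / 2)).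
  assert (Hq : 0 <= a * a / (4 * k) < 1).
  { split. apply Rdiv_le_0_compat; nra. apply (Rmult_lt_reg_r (4 * k)); [lra|].
    unfold Rdiv. rewrite Rmult_assoc, Rinv_l by lra. lra. }
  assert (Eth : exp th = (a * a / (4 * k) + 1) / 2) by (unfold th; apply exp_ln; lra).
  assert (Hc : exists S1, S < S1 /\ th < x S1).
  { destruct (Classical_Prop.classic (exists S1, S < S1 /\ th < x S1)) as [|NE]; auto. exfalso.
    assert (Hle : forall s, S < s -> x s <= th).
    { intros s Hs. destruct (Rle_or_lt (x s) th); auto. exfalso; apply NE; exists s; auto. }
    set (mu := k * (1 - exp th)).
    assert (Hmu : 0 < mu) by (unfold mu; nra).
    set (A := S + 1).
    set (hf := fun s => x1 s + a * x s - mu * s).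
    assert (Mh : forall v, A <= v -> hf A <= hf v).
    { intros v Hv. apply (mono hf (fun s => - k * (exp (x s) - 1) - mu) A); [ | | lra | exact Hv].
      - intros y _. unfold hf. auto_derive. + split; [apply exx1|split; [apply exx|auto]].
        + rewrite Dx, Dx1. ring.
      - intros y Hy. pose proof (exp_le _ _ (Hle y ltac:(unfold A in Hy; lra))). unfold mu. nra. }
    set (hA := hf A) in *.
    set (s2 := Rmax A ((1 - hA + a * th) / mu)).
    assert (Hs2 : forall s, s2 <= s -> 1 <= x1 s).
    { intros s Hs.
      pose proof (Rmax_l A ((1 - hA + a * th) / mu)) as R1.
      pose proof (Rmax_r A ((1 - hA + a * th) / mu)) as R2.
      fold s2 in R1, R2.
      assert (As : A <= s) by lra.
      pose proof (Mh s As) as Q1. unfold hf in Q1.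
      pose proof (Hle s ltac:(unfold A in As; lra)) as Q2.
      assert (Q3 : mu * ((1 - hA + a * th) / mu) <= mu * s) by (apply Rmult_le_compat_l; lra).
      replace (mu * ((1 - hA + a * th) / mu)) with (1 - hA + a * th) in Q3 by (field; lra).
      nra. }
    assert (As2 : A <= s2) by apply Rmax_l.
    set (v := s2 + th - x s2 + 1).
    pose proof (Hle s2 ltac:(unfold A in As2; lra)).
    assert (x s2 - s2 <= x v - v).
    { apply (mono (fun s => x s - s) (fun s => x1 s - 1) s2); [| | lra | unfold v; lra].
      - intros y _. auto_derive. + apply exx. + rewrite Dx. ring.
      - intros y Hy. pose proof (Hs2 y Hy). lra. }
    pose proof (Hle v ltac:(unfold v, A in *; lra)). unfold v in *. lra. }
  destruct Hc as [S1 [HS1 HxS1]].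
  apply (riccati S1 (k * exp th)).
  - rewrite Eth. replace (k * ((a * a / (4 * k) + 1) / 2)) with (a * a / 8 + k / 2) by (field; lra). lra.
  - intros s Hs. pose proof (Hb s ltac:(lra)) as Xn.
    pose proof (Xm S1 s HS1 Hs) as Xg.
    split; [lra|].
    set (X := x s) in *.
    pose proof (exp_ineq1_le (- X)).
    assert (EE : exp (- X) * exp X = 1) by (rewrite <- exp_plus; replace (-X + X) with 0 by ring; apply exp_0).
    assert (Eg : exp th <= exp X) by (apply exp_le; lra).
    pose proof (exp_pos X).
    set (E := exp X) in *.
    assert (E * (1 - X) <= 1) by nra.
    replace (k * (E - 1) / X) with (k * (1 - E) / (- X)) by (field; lra).
    apply (Rmult_le_reg_r (- X)); [lra|].
    replace (k * (1 - E) / - X * - X) with (k * (1 - E)) by (field; lra).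
    rewrite Rmult_assoc. apply Rmult_le_compat_l; [lra|].
    assert (exp th * - X <= E * - X) by (apply Rmult_le_compat_r; lra). lra.
Qed.

Lemma case2 S : ~ (forall s, S < s -> x1 s <= 0).
Proof.
  intro H1.
  assert (Xm : forall u v, S < u -> u <= v -> x v <= x u).
  { intros u v Hu Huv. cut (- x u <= - x v); [lra|].
    apply (mono (fun s => - x s) (fun s => - x1 s) u); [ | | lra | exact Huv].
    - intros y _. auto_derive. apply exx. rewrite Dx. ring.
    - intros y Hy. pose proof (H1 y ltac:(lra)). lra. }
  assert (Ha1 : forall s, S < s -> 0 <= x s).
  { intros s0 Hs0. destruct (Rle_or_lt 0 (x s0)) as [|Hneg]; auto. exfalso.
    set (m := k * (1 - exp (x s0))).
    assert (Hm : 0 < m) by (unfold m; pose proof (exp_lt1 _ Hneg); nra).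
    set (v := s0 - x1 s0 / m + 1).
    assert (x1 s0 / m <= 0).
    { pose proof (H1 s0 Hs0). unfold Rdiv. pose proof (Rinv_0_lt_compat m Hm). nra. }
    assert (v1 : x1 s0 - m * s0 <= x1 v - m * v).
    { apply (mono (fun s => x1 s - m * s) (fun s => - a * x1 s - k * (exp (x s) - 1) - m) s0);
        [| | lra | unfold v; lra].
      - intros y _. auto_derive. + apply exx1. + rewrite Dx1. ring.
      - intros y Hy. pose proof (H1 y ltac:(lra)) as Q1. pose proof (Xm s0 y ltac:(lra) Hy) as Q2.
        pose proof (exp_le _ _ Q2). unfold m. nra. }
    assert (m * v = m * s0 - x1 s0 + m) by (unfold v; field; lra).
    pose proof (H1 v ltac:(unfold v; lra)). lra. }
  assert (Hb : forall s, S < s -> 0 < x s).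
  { intros s1 Hs1. destruct (Ha1 s1 Hs1) as [|E]; auto. exfalso. apply (HE s1); auto.
    apply (deriv_zero_min x S (s1 + 1) s1); auto; try lra.
    intros y Hy _. rewrite <- E. apply Ha1. exact Hy. }
  apply (riccati (S + 1) k).
  - lra.
  - intros s Hs. pose proof (Hb s ltac:(lra)) as Xp. split; [lra|].
    pose proof (exp_ineq1_le (x s)).
    apply (Rmult_le_reg_r (x s)); [lra|]. unfold Rdiv.
    rewrite Rmult_assoc, Rinv_l, Rmult_1_r by lra. nra.
Qed.

Lemma osc S : (exists s, S < s /\ 0 < x1 s) /\ (exists s, S < s /\ x1 s < 0).
Proof.
  split.
  - destruct (Classical_Prop.classic (exists s, S < s /\ 0 < x1 s)) as [|NE]; auto.
    exfalso. apply (case2 S). intros s Hs. destruct (Rle_or_lt (x1 s) 0); auto.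
    exfalso; apply NE; exists s; auto.
  - destruct (Classical_Prop.classic (exists s, S < s /\ x1 s < 0)) as [|NE]; auto.
    exfalso. apply (case1 S). intros s Hs. destruct (Rle_or_lt 0 (x1 s)); auto.
    exfalso; apply NE; exists s; auto.
Qed.
End Osc.

Lemma build_seq (f : R -> R) :
  (forall T, (exists t, T < t /\ 0 < t /\ 0 < f t) /\ (exists t, T < t /\ 0 < t /\ f t < 0)) ->
  infinitely_many_sign_changes f.
Proof.
  intros H N.
  assert (G : exists ts : nat -> R,
    (forall i, (i <= N)%nat -> 0 < ts i) /\
    (forall i, (i < N)%nat -> ts i < ts (S i) /\ f (ts i) * f (ts (S i)) < 0) /\
    f (ts N) <> 0).
  { induction N as [|N IH].
    - destruct (proj1 (H 0)) as [t [_ [Ht Hf]]].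
      exists (fun _ => t). split; [intros; lra|]. split; [intros i Hi; lia|lra].
    - destruct IH as [ts [H1 [H2 H3]]].
      assert (Ht' : exists t', ts N < t' /\ 0 < t' /\ f (ts N) * f t' < 0).
      { destruct (Rlt_or_le 0 (f (ts N))) as [P|P].
        - destruct (proj2 (H (ts N))) as [t [A [B C]]]. exists t. split; auto. split; auto. nra.
        - destruct (proj1 (H (ts N))) as [t [A [B C]]]. exists t. split; auto. split; auto.
          assert (f (ts N) < 0) by lra. nra. }
      destruct Ht' as [t' [A [B C]]].
      exists (fun i => if Nat.leb i N then ts i else t').
      split; [|split].
      + intros i Hi. destruct (Nat.leb i N) eqn:E; auto. apply H1. apply Nat.leb_le; auto.
      + intros i Hi. destruct (Nat.eq_dec i N) as [->|Ne].
        * rewrite Nat.leb_refl. replace (Nat.leb (S N) N) with false by (symmetry; apply Nat.leb_gt; lia).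
          auto.
        * replace (Nat.leb i N) with true by (symmetry; apply Nat.leb_le; lia).
          replace (Nat.leb (S i) N) with true by (symmetry; apply Nat.leb_le; lia).
          apply H2; lia.
      + replace (Nat.leb (S N) N) with false by (symmetry; apply Nat.leb_gt; lia).
        intro Z. rewrite Z in C. lra. }
  destruct G as [ts [H1 [H2 _]]]. exists ts. auto.
Qed.

Theorem theorem3p1 (alpha : R) (n : nat) (w : R -> R) :
  0 < alpha -> (3 <= n)%nat -> INR n < 10 + 4 * alpha ->
  gelfand_ivp_solution n alpha w ->
  infinitely_many_sign_changes (Derive (lambda_of alpha w)).
Proof.
  intros Hal Hn Hn2 [W0 [Wlim Wode]].
  set (c := alpha + 2).
  set (a := INR n - 2).
  set (k := a * c).
  assert (Ha : 0 < a).
  { unfold a. apply le_INR in Hn. simpl in Hn. lra. }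
  assert (Hk : 0 < k) by (unfold k, c; nra).
  assert (Hak : a * a < 4 * k) by (unfold k, c, a in *; nra).
  set (x := fun s => w (exp s) + c * s - ln k).
  set (x1 := fun s => exp s * Derive w (exp s) + c).
  assert (Hx : forall s, is_derive x s (x1 s)).
  { intros s. destruct (Wode (exp s) (exp_pos s)) as [D1 [D2 E]].
    unfold x, x1. auto_derive; auto. change (fun x0 : R => w x0) with w. ring. }
  assert (Hx1 : forall s, is_derive x1 s (- a * x1 s - k * (exp (x s) - 1))).
  { intros s. destruct (Wode (exp s) (exp_pos s)) as [D1 [D2 E]].
    unfold x, x1. auto_derive; auto.
    change (fun x0 : R => Derive w x0) with (Derive w).
    replace (Derive (Derive w) (exp s)) with
      (- ((INR n - 1) / exp s * Derive w (exp s)) - Rpower (exp s) alpha * exp (w (exp s))) by lra.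
    unfold Rpower. rewrite ln_exp.
    replace (w (exp s) + c * s - ln k) with (w (exp s) + alpha * s + s + s + - ln k) by (unfold c; ring).
    rewrite !exp_plus, exp_Ropp, exp_ln by lra.
    pose proof (exp_pos s).
    unfold k, a, c. field. unfold a in Ha. repeat split; lra. }
  assert (HE : forall s, x s = 0 -> x1 s = 0 -> False).
  { intros s1 X0 X10.
    pose proof (energy_zero a k x x1 Ha Hk Hx Hx1 s1 X0 X10) as Z.
    pose proof (proj1 (filterlim_locally _ _) Wlim (mkposreal 1 Rlt_0_1)) as H1.
    destruct H1 as [d Hd]. simpl in Hd.
    unfold ball in Hd. simpl in Hd. unfold AbsRing_ball, abs, minus, plus, opp in Hd. simpl in Hd.
    pose proof (cond_pos d) as dpos.
    set (s := Rmin (Rmin s1 (ln d - 1)) (Rmin ((ln k - 1) / c) 0) - 1).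
    assert (Q1 : s <= s1) by (unfold s; repeat (apply Rmin_glb_lt || apply Rmin_l || idtac);
      pose proof (Rmin_l (Rmin s1 (ln d - 1)) (Rmin ((ln k - 1) / c) 0));
      pose proof (Rmin_l s1 (ln d - 1)); lra).
    assert (Q2 : s < ln d).
    { unfold s. pose proof (Rmin_l (Rmin s1 (ln d - 1)) (Rmin ((ln k - 1) / c) 0)).
      pose proof (Rmin_r s1 (ln d - 1)). lra. }
    assert (Q3 : s <= (ln k - 1) / c).
    { unfold s. pose proof (Rmin_r (Rmin s1 (ln d - 1)) (Rmin ((ln k - 1) / c) 0)).
      pose proof (Rmin_l ((ln k - 1) / c) 0). lra. }
    assert (Q4 : s <= 0).
    { unfold s. pose proof (Rmin_r (Rmin s1 (ln d - 1)) (Rmin ((ln k - 1) / c) 0)).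
      pose proof (Rmin_r ((ln k - 1) / c) 0). lra. }
    assert (hd : exp s < d) by (rewrite <- (exp_ln d) by lra; apply exp_increasing; lra).
    assert (h1 : exp s <= 1) by (rewrite <- exp_0; apply exp_le; lra).
    pose proof (exp_pos s) as hp.
    specialize (Hd (exp s)). rewrite W0 in Hd.
    replace (exp s + - 0) with (exp s) in Hd by ring.
    rewrite Rabs_right in Hd by lra.
    specialize (Hd hd hp).
    pose proof (Z s Q1) as Zs. unfold x in Zs.
    assert (cpos : 0 < c) by (unfold c; lra).
    assert (cs : c * s <= ln k - 1).
    { apply (Rmult_le_compat_l c) in Q3; [|lra].
      replace (c * ((ln k - 1) / c)) with (ln k - 1) in Q3 by (field; lra). lra. }
    assert (wge : 1 <= w (exp s)) by lra.
    replace ((w (exp s) - 0) / exp s + - 0) with (w (exp s) / exp s) in Hd by (field; lra).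
    assert (1 <= w (exp s) / exp s).
    { apply (Rmult_le_reg_r (exp s)); [lra|]. replace (w (exp s) / exp s * exp s) with (w (exp s)) by (field; lra). nra. }
    rewrite Rabs_right in Hd by lra. lra. }
  pose proof (osc a k x x1 Ha Hk Hak Hx Hx1 HE) as O.
  assert (Sg : forall s, exists P, 0 < P /\ Derive (lambda_of alpha w) (exp s) = P * x1 s).
  { intros s. destruct (Wode (exp s) (exp_pos s)) as [D1 [D2 E]].
    exists (exp (c * ln (exp s)) * exp (w (exp s)) / exp s).
    split.
    - pose proof (exp_pos s). pose proof (exp_pos (c * ln (exp s))). pose proof (exp_pos (w (exp s))).
      apply Rdiv_lt_0_compat; [apply Rmult_lt_0_compat|]; lra.
    - apply is_derive_unique. unfold lambda_of, Rpower. fold c.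
      auto_derive.
      + repeat split; auto. apply exp_pos.
      + unfold x1. pose proof (exp_pos s). change (fun x0 : R => w x0) with w. field. lra. }
  apply build_seq. intros T.
  set (S0 := ln (Rmax T 1)).
  assert (HS0 : forall s, S0 < s -> T < exp s /\ 0 < exp s).
  { intros s Hs. split; [|apply exp_pos].
    pose proof (Rmax_l T 1). pose proof (Rmax_r T 1).
    apply exp_increasing in Hs. unfold S0 in Hs. rewrite exp_ln in Hs by lra. lra. }
  destruct (O S0) as [[s [Hs Hp]] [s' [Hs' Hn']]].
  split.
  - exists (exp s). destruct (HS0 s Hs). split; auto. split; auto.
    destruct (Sg s) as [P [PP ->]]. apply Rmult_lt_0_compat; auto.
  - exists (exp s'). destruct (HS0 s' Hs'). split; auto. split; auto.
    destruct (Sg s') as [P [PP ->]]. nra.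
Qed.
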